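(* Let $\Gamma$ be a simple, undirected, connected $r$-regular graph of order $p$ that contains a cycle and has girth $g(\Gamma)\ge 7$. Then $\gamma_{[3R]}(\Gamma)\le 2p-2r^2+3r-2$.
   Context: The girth of a graph is the minimum length of a cycle in it. For a graph $\Gamma=(V,E)$ and $h:V\to\{0,1,2,3,4\}$, let $AN(v)=\{w\in N(v):h(w)\ge 1\}$, $AN[v]=AN(v)\cup\{v\}$ and $h(S)=\sum_{u\in S}h(u)$. $h$ is a triple Roman dominating function (3RDF) if every $v$ with $h(v)<3$ satisfies $h(AN[v])\ge|AN(v)|+3$. The triple Roman domination number $\gamma_{[3R]}(\Gamma)$ is the minimum weight $h(V)$ of a 3RDF of $\Gamma$. *)

(* Defs.v *)
From mathcomp Require Import all_boot all_order all_algebra.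
Set Implicit Arguments. Unset Strict Implicit. Unset Printing Implicit Defensive.

Definition simple_graph (T : finType) (e : rel T) : Prop :=
  symmetric e /\ irreflexive e.

Definition nbhd (T : finType) (e : rel T) (v : T) : {set T} := [set w | e v w].

Definition regular (T : finType) (e : rel T) (r : nat) : Prop :=
  forall v : T, #|nbhd e v| = r.

Definition connected_graph (T : finType) (e : rel T) : Prop :=
  forall u v : T, connect e u v.

Definition is_graph_cycle (T : finType) (e : rel T) (c : seq T) : Prop :=
  3 <= size c /\ ucycle e c.

Definition has_cycle (T : finType) (e : rel T) : Prop :=
  exists c : seq T, is_graph_cycle e c.

Definition girth_ge (T : finType) (e : rel T) (g : nat) : Prop :=
  forall c : seq T, is_graph_cycle e c -> g <= size c.

Definition active_nbhd (T : finType) (e : rel T) (h : T -> nat) (v : T) : {set T} :=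
  [set w | e v w & 1 <= h w].

Definition is_3RDF (T : finType) (e : rel T) (h : T -> nat) : Prop :=
  (forall v, h v <= 4) /\
  (forall v, h v < 3 ->
     \sum_(w in active_nbhd e h v) h w + h v >= #|active_nbhd e h v| + 3).

Definition weight (T : finType) (h : T -> nat) : nat := \sum_(v : T) h v.

Definition is_triple_roman_domination_number (T : finType) (e : rel T) (n : nat) : Prop :=
  (exists h, is_3RDF e h /\ weight h = n) /\
  (forall h, is_3RDF e h -> n <= weight h).

(* Main.v *)
Require Import Defs.
From mathcomp Require Import all_boot all_order all_algebra zify.
Import GRing.Theory Num.Theory.

Lemma sum_in_card (T : finType) (A : {pred T}) :
  \sum_(v : T) ((v \in A) : nat) = #|A|.
Proof. by rewrite -sum1_card [RHS]big_mkcond /=; apply: eq_bigr => v _; case: (v \in A). Qed.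

Lemma sumconst (T : finType) n : \sum_(v : T) n = #|T| * n.
Proof. by rewrite -sum_nat_const. Qed.

Section G.
Variables (T : finType) (e : rel T).
Hypotheses (Hsym : symmetric e) (Hirr : irreflexive e) (Hg : girth_ge e 7).

Lemma short_cyc (s : seq T) : 3 <= size s -> size s < 7 -> cycle e s -> uniq s -> False.
Proof.
move=> h3 h7 hc hu. have := Hg s (conj h3 (introT andP (conj hc hu))). by rewrite leqNgt h7.
Qed.

Lemma neq_of_e {a b} : e a b -> a != b.
Proof. by apply: contraTneq => ->; rewrite Hirr. Qed.

Lemma no_tri a b c : e a b -> e b c -> e c a -> False.
Proof.
move=> ab bc ca; apply: (@short_cyc [:: a; b; c]) => //=; first by rewrite ab bc ca.
rewrite !inE !negb_or (neq_of_e ab) (neq_of_e bc).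
by rewrite eq_sym (neq_of_e ca).
Qed.

Arguments no_tri {a b c}.

Lemma no_c4 a b c d : e a b -> e b c -> e c d -> e d a -> a != c -> b != d -> False.
Proof.
move=> ab bc cd da ac bd; apply: (@short_cyc [:: a; b; c; d]) => //=; first by rewrite ab bc cd da.
rewrite !inE !negb_or (neq_of_e ab) (neq_of_e bc) (neq_of_e cd) ac bd.
by rewrite eq_sym (neq_of_e da).
Qed.

Lemma no_c5 a b c d f : e a b -> e b c -> e c d -> e d f -> e f a ->
  a != c -> a != d -> b != d -> b != f -> c != f -> False.
Proof.
move=> ab bc cd df fa ac ad bd bf cf; apply: (@short_cyc [:: a; b; c; d; f]) => //=.
  by rewrite ab bc cd df fa.
rewrite !inE !negb_or (neq_of_e ab) (neq_of_e bc) (neq_of_e cd) (neq_of_e df) ac ad bd bf cf.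
by rewrite eq_sym (neq_of_e fa).
Qed.

Lemma no_c6 a b c d f k : e a b -> e b c -> e c d -> e d f -> e f k -> e k a ->
  a != c -> a != d -> a != f -> b != d -> b != f -> b != k -> c != f -> c != k -> d != k -> False.
Proof.
move=> ab bc cd df fk ka ac ad af bd bf bk cf ck dk.
apply: (@short_cyc [:: a; b; c; d; f; k]) => //=.
  by rewrite ab bc cd df fk ka.
rewrite !inE !negb_or (neq_of_e ab) (neq_of_e bc) (neq_of_e cd) (neq_of_e df) (neq_of_e fk).
by rewrite ac ad af bd bf bk cf ck dk eq_sym (neq_of_e ka).
Qed.


Lemma r_ge2 (r : nat) : regular e r -> has_cycle e -> exists u : T, 2 <= r.
Proof.
move=> Hreg [c [Hc3 /andP[Hcyc Hu]]].
case: c Hc3 Hcyc Hu => [|a [|b [|d s]]] //= _ Hcyc Hu.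
exists a; rewrite -(Hreg a).
have Hab : e a b by case/andP: Hcyc.
have Hla : e (last d s) a.
  move: Hcyc => /andP[_ /andP[_]]; rewrite -cats1 cat_path /= => /andP[_].
  by rewrite andbT.
have Hne : b != last d s.
  case/andP: Hu => _ /andP[Hb _].
  by apply: contraNneq Hb => ->; rewrite mem_last.
have -> : 2 = #|[set b; last d s]| by rewrite cards2 Hne.
apply: subset_leq_card; apply/subsetP => x; rewrite !inE => /orP[]/eqP->.
  by [].
by rewrite Hsym.
Qed.

Lemma main (r gam : nat) : regular e r -> has_cycle e ->
  (forall h, is_3RDF e h -> gam <= weight h) ->
  exists n, [/\ r * (r - 1) <= n, gam + 2 * n + 2 <= 2 * #|T| + r & 2 <= r].
Proof.
move=> Hreg Hcy Hmin.
have [u Hr2] := @r_ge2 r Hreg Hcy.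
pose N1 := nbhd e u.
pose N2 := [set y | (y != u) && (y \notin N1) && [exists x in N1, e x y]].
pose h := fun y => if y == u then 0 else if y \in N1 then 3 else if y \in N2 then 0 else 2.
have inN1 x : (x \in N1) = e u x by rewrite inE.
have uN1 : u \notin N1 by rewrite inN1 Hirr.
have N2P y : reflect [/\ y != u, y \notin N1 & exists2 x, x \in N1 & e x y] (y \in N2).
  apply: (iffP idP); rewrite [_ \in N2]inE.
    by case/andP => /andP[yu yN1] /existsP[x /andP[xN1 exy]]; split => //; exists x.
  by case=> yu yN1 [x xN1 exy]; rewrite yu yN1 /=; apply/existsP; exists x; rewrite xN1.
have tri x1 x2 : x1 \in N1 -> x2 \in N1 -> ~~ e x1 x2.
  rewrite !inN1 => h1 h2; apply/negP => h12.
  by apply: (no_tri h1 h12); rewrite Hsym.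
have uniqN1 y x1 x2 : y != u -> x1 \in N1 -> x2 \in N1 -> e x1 y -> e x2 y -> x1 = x2.
  move=> yu h1 h2 e1 e2; apply/eqP/negP => /negP x12.
  apply: (no_c4 u x1 y x2) => //;
    solve [by rewrite -inN1 | by rewrite Hsym -?inN1 | by rewrite eq_sym | by rewrite Hsym | done].
have noN2N2 w w' : w \in N2 -> w' \in N2 -> ~~ e w w'.
  move=> /N2P[wu wN1 [x xN1 exw]] /N2P[w'u w'N1 [x' x'N1 exw']]; apply/negP => eww'.
  have xw : x != w by apply: contraNneq wN1 => <-.
  have xw' : x != w' by apply: contraNneq w'N1 => <-.
  have x'w : x' != w by apply: contraNneq wN1 => <-.
  have x'w' : x' != w' by apply: contraNneq w'N1 => <-.
  have ux : u != x by apply: contraNneq uN1 => ->.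
  have ux' : u != x' by apply: contraNneq uN1 => ->.
  case: (eqVneq x x') => [exx'|nxx'].
    subst x'. by apply: (no_tri exw eww'); rewrite Hsym.
  apply: (no_c5 u x w w' x') => //;
    solve [by rewrite -inN1 | by rewrite Hsym -?inN1 | by rewrite eq_sym | by rewrite Hsym | done].
have uniqN2 z w1 w2 : z != u -> z \notin N1 -> z \notin N2 -> w1 \in N2 -> w2 \in N2 ->
    e w1 z -> e w2 z -> w1 = w2.
  move=> zu zN1 zN2 hw1 hw2 e1 e2; apply/eqP/negP => /negP w12.
  move: (hw1) (hw2) => /N2P[w1u w1N1 [x1 x1N1 ex1]] /N2P[w2u w2N1 [x2 x2N1 ex2]].
  have x1w1 : x1 != w1 by apply: contraNneq w1N1 => <-.
  have x1w2 : x1 != w2 by apply: contraNneq w2N1 => <-.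
  have x2w1 : x2 != w1 by apply: contraNneq w1N1 => <-.
  have x2w2 : x2 != w2 by apply: contraNneq w2N1 => <-.
  have x1z : x1 != z by apply: contraNneq zN1 => <-.
  have x2z : x2 != z by apply: contraNneq zN1 => <-.
  have w1z : w1 != z by apply: contraNneq zN2 => <-.
  have w2z : w2 != z by apply: contraNneq zN2 => <-.
  have ux1 : u != x1 by apply: contraNneq uN1 => ->.
  have ux2 : u != x2 by apply: contraNneq uN1 => ->.
  have uw1 : u != w1 by rewrite eq_sym.
  have uw2 : u != w2 by rewrite eq_sym.
  have uz : u != z by rewrite eq_sym.
  case: (eqVneq x1 x2) => [exx|nxx].
    subst x2.
    apply: (no_c4 x1 w1 z w2) => //;
    solve [by rewrite -inN1 | by rewrite Hsym -?inN1 | by rewrite eq_sym | by rewrite Hsym | done].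
  apply: (no_c6 u x1 w1 z w2 x2) => //;
    solve [by rewrite -inN1 | by rewrite Hsym -?inN1 | by rewrite eq_sym | by rewrite Hsym | done].
have uN2 : u \notin N2 by apply/N2P; case; rewrite eqxx.
have N12 y : y \in N1 -> y \notin N2 by move=> yN1; apply/N2P; case=> _; rewrite yN1.
have hu : h u = 0 by rewrite /h eqxx.
have hN1 y : y \in N1 -> h y = 3.
  move=> yN1; rewrite /h yN1; case: eqP => [yu|//]; by rewrite yu (negbTE uN1) in yN1.
have hN2 y : y \in N2 -> h y = 0.
  move=> yN2; rewrite /h yN2; case: eqP => [yu|_]; first by rewrite yu (negbTE uN2) in yN2.
  by case/N2P: yN2 => _ /negbTE -> _.
have hR y : y != u -> y \notin N1 -> y \notin N2 -> h y = 2.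
  by move=> yu yN1 yN2; rewrite /h (negbTE yu) (negbTE yN1) (negbTE yN2).
have nbR y x : y != u -> y \notin N1 -> y \notin N2 -> e y x -> (x != u) && (x \notin N1).
  move=> yu yN1 yN2 eyx; apply/andP; split.
    by apply: contraNneq yN1 => xu; rewrite inN1 -xu Hsym.
  apply: contra yN2 => xN1; apply/N2P; split => //; exists x => //; by rewrite Hsym.
have H3 : is_3RDF e h.
  split.
    by move=> v; rewrite /h; case: (v == u) => //; case: (v \in N1) => //; case: (v \in N2).
  move=> v hv.
  case: (eqVneq v u) => [->|vu].
    have AN : active_nbhd e h u = N1.
      apply/setP => w; rewrite !inE; case: (boolP (e u w)) => //= euw.
      by rewrite hN1 // inN1.
    rewrite AN hu (eq_bigr (fun _ => 3)) ?sum_nat_const; last by move=> w /hN1.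
    have := Hreg u; rewrite /nbhd -/N1 => ->. lia.
  case: (boolP (v \in N1)) => [vN1|vN1]; first by rewrite hN1 in hv.
  case: (boolP (v \in N2)) => [vN2|vN2].
    have AN : active_nbhd e h v = nbhd e v.
      apply/setP => w; rewrite !inE; case: (boolP (e v w)) => //= evw.
      case: (eqVneq w u) => [wu|wu]; first by rewrite wu Hsym -inN1 (negbTE vN1) in evw.
      case: (boolP (w \in N1)) => [wN1|wN1]; first by rewrite hN1.
      case: (boolP (w \in N2)) => [wN2|wN2]; first by rewrite (negbTE (noN2N2 _ _ vN2 wN2)) in evw.
      by rewrite hR.
    rewrite AN (hN2 _ vN2) Hreg addn0.
    case/N2P: (vN2) => _ _ [x0 x0N1 ex0v].
    have x0in : x0 \in nbhd e v by rewrite inE Hsym.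
    have S1 : \sum_(i in nbhd e v) h i = h x0 + \sum_(i in nbhd e v | i != x0) h i by rewrite (bigD1 x0).
    have S2 : \sum_(i in nbhd e v) 2 = 2 + \sum_(i in nbhd e v | i != x0) 2 by rewrite (bigD1 x0).
    have S3 : \sum_(i in nbhd e v | i != x0) 2 <= \sum_(i in nbhd e v | i != x0) h i.
      apply: leq_sum => w /andP[]; rewrite inE => evw _.
      case: (eqVneq w u) => [wu|wu]; first by rewrite wu Hsym -inN1 (negbTE vN1) in evw.
      case: (boolP (w \in N1)) => [wN1|wN1]; first by rewrite hN1.
      case: (boolP (w \in N2)) => [wN2|wN2]; first by rewrite (negbTE (noN2N2 _ _ vN2 wN2)) in evw.
      by rewrite hR.
    have S4 : \sum_(i in nbhd e v) 2 = #|nbhd e v| * 2 by rewrite sum_nat_const.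
    rewrite Hreg in S4. rewrite hN1 // in S1. lia.
  rewrite hR //.
  have hAN w : w \in active_nbhd e h v -> h w = 2.
    rewrite inE => /andP[evw hw]; case/andP: (nbR v w vu vN1 vN2 evw) => wu wN1.
    case: (boolP (w \in N2)) => [wN2|wN2]; first by rewrite hN2 in hw.
    by rewrite hR.
  rewrite (eq_bigr (fun _ => 2)) ?sum_nat_const; last by move=> w /hAN.
  suff : 0 < #|active_nbhd e h v| by lia.
  have : 1 < #|nbhd e v| by rewrite Hreg.
  case/card_gt1P => w1 [w2 [w1in w2in w12]].
  rewrite !inE in w1in w2in.
  apply/card_gt0P.
  case: (boolP (w1 \in N2)) => [w1N2|w1N2].
    case: (boolP (w2 \in N2)) => [w2N2|w2N2].
      have := uniqN2 v w1 w2 vu vN1 vN2 w1N2 w2N2; rewrite !(Hsym _ v) => /(_ w1in w2in) E.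
      by rewrite E eqxx in w12.
    exists w2; rewrite inE w2in /=; case/andP: (nbR v w2 vu vN1 vN2 w2in) => wu wN1.
    by rewrite hR.
  exists w1; rewrite inE w1in /=; case/andP: (nbR v w1 vu vN1 vN2 w1in) => wu wN1.
  by rewrite hR.
have card_S x : x \in N1 -> #|[set y | e x y & y != u]| = r - 1.
  move=> xN1; have -> : [set y | e x y & y != u] = nbhd e x :\ u.
    by apply/setP => y; rewrite !inE andbC.
  have := cardsD1 u (nbhd e x); rewrite Hreg inE Hsym -inN1 xN1 /=; lia.
have cnt : \sum_(x in N1) #|[set y | e x y & y != u]| <= #|N2|.
  rewrite -sum_in_card.
  under eq_bigr => x _ do rewrite -sum_in_card.
  rewrite exchange_big /=. apply: leq_sum => y _.
  case: (boolP (y \in N2)) => [yN2|yN2].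
    case/N2P: (yN2) => yu yN1 [x0 x0N1 ex0y].
    rewrite (bigD1 x0) //= big1 ?addn0; first by case: (_ \in _).
    move=> x /andP[xN1 xx0]; case: (boolP (_ \in _)) => //; rewrite inE => /andP[exy _].
    by rewrite (uniqN1 y x x0 yu xN1 x0N1 exy ex0y) eqxx in xx0.
  rewrite big1 // => x xN1; case: (boolP (_ \in _)) => //; rewrite inE => /andP[exy yu].
  have yN1 : y \notin N1.
    by apply/negP => yN1; rewrite (negbTE (tri _ _ xN1 yN1)) in exy.
  by exfalso; move/negP: yN2; apply; apply/N2P; split=> //; exists x.
have HN1 : #|N1| = r := Hreg u.
have cntr : r * (r - 1) <= #|N2|.
  have E : \sum_(x in N1) #|[set y | e x y & y != u]| = #|N1| * (r - 1).
    by rewrite -sum_nat_const; apply: eq_bigr => x /card_S.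
  by rewrite HN1 in E; rewrite -E.
have Hw : weight h + 2 * #|N2| + 2 = 2 * #|T| + r.
  have E : \sum_v (h v + 2 * (v \in N2) + 2 * (v \in [set u])) = \sum_v (2 + (v \in N1)).
    apply: eq_bigr => v _; rewrite inE.
    case: (eqVneq v u) => [->|vu]; first by rewrite hu (negbTE uN2) (negbTE uN1).
    case: (boolP (v \in N1)) => [vN1|vN1]; first by rewrite hN1 // (negbTE (N12 _ vN1)).
    case: (boolP (v \in N2)) => [vN2|vN2]; first by rewrite hN2.
    by rewrite hR.
  rewrite !big_split /= !sum_in_card !big1_eq sumconst cards1 HN1 in E.
  rewrite /weight; lia.
exists #|N2|; split => //.
have := Hmin h H3; lia.
Qed.
End G.

Local Open Scope ring_scope.

Theorem corollary10 (T : finType) (e : rel T) (r : nat) (gam : nat) :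
  simple_graph e -> connected_graph e -> regular e r -> has_cycle e ->
  girth_ge e 7 ->
  is_triple_roman_domination_number e gam ->
  (gam%:Z <= 2 * (#|T|)%:Z - 2 * (r%:Z) ^+ 2 + 3 * r%:Z - 2).
Proof.
move=> [Hsym Hirr] _ Hreg Hcy Hg [_ Hmin].
have [n [H1 H2 H3]] := @main T e Hsym Hirr Hg r gam Hreg Hcy Hmin.
rewrite expr2. nia.
Qed.
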